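(* Let $b\in C^1([0,\infty))$ satisfy $b(t)>0$ for all $t\ge0$ and $b_0:=\limsup_{t\to\infty}\frac{|b'(t)|}{b(t)^2}<1$. Define for $t\ge0$ $$\Phi(t)=\int_t^\infty\exp\Big(-\int_t^sb(\sigma)\,d\sigma\Big)\,ds.$$ Then $\Phi$ is well defined (finite) and: (i) $\Phi(0)=B_0:=\int_0^\infty\exp(-\int_0^sb(\sigma)d\sigma)\,ds$, and $\Phi'(t)-b(t)\Phi(t)=-1$ for every $t\ge0$; (ii) there exist constants $t_0>0$, $B_1>0$, $B_2>0$ such that $\frac{B_1}{b(t)}\le\Phi(t)\le\frac{B_2}{b(t)}$ for every $t\ge t_0$; (iii) for every $t\ge t_0$, $|\Phi'(t)|\le\frac{1+b_0}{1-b_0}$; in particular $\Phi'$ is bounded on $[0,\infty)$. *)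

(* Defs.v *)
From Stdlib Require Import Reals.
From Coquelicot Require Import Coquelicot.
Open Scope R_scope.

(* f' t is the derivative of f at t relative to the domain [0, +oo)
   (one-sided at t = 0, ordinary two-sided derivative at t > 0). *)
Definition is_derive_nonneg (f f' : R -> R) (t : R) : Prop :=
  filterlim (fun s => (f s - f t) / (s - t))
    (within (fun s => 0 <= s /\ s <> t) (locally t)) (locally (f' t)).

Definition continuous_nonneg (g : R -> R) (t : R) : Prop :=
  filterlim g (within (fun s => 0 <= s) (locally t)) (locally (g t)).

(* limsup_{t -> +oo} f t = l  (l a real number); mirrors Coquelicot's
   is_LimSup_seq for a function of a real variable. *)
Definition is_LimSup_infty (f : R -> R) (l : R) : Prop :=
  forall eps : posreal,
    (forall T : R, exists t, T <= t /\ l - eps < f t) /\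
    (exists T : R, forall t, T <= t -> f t < l + eps).

Definition Phi_integrand (b : R -> R) (t s : R) : R := exp (- RInt b t s).

Definition Phi (b : R -> R) (t : R) : R :=
  RInt_gen (Phi_integrand b t) (at_point t) (Rbar_locally p_infty).

(* Main.v *)
Require Import Defs.
From Stdlib Require Import Reals Lra Classical.
From Coquelicot Require Import Coquelicot.
Open Scope R_scope.


Lemma ballR (x e y : R) : ball x e y <-> Rabs (y - x) < e.
Proof. split; intro H; exact H. Qed.

Lemma within_eps (D : R -> Prop) (f : R -> R) (t l : R) :
  filterlim f (within D (locally t)) (locally l) <->
  (forall eps, 0 < eps -> exists d, 0 < d /\
     forall s, D s -> Rabs (s - t) < d -> Rabs (f s - l) < eps).
Proof.
  rewrite filterlim_locally. split.
  - intros H eps Heps. destruct (H (mkposreal eps Heps)) as [d Hd].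
    exists d. split; [apply cond_pos|]. intros s Ds Hs.
    apply (Hd s); [apply ballR; exact Hs| exact Ds].
  - intros H eps. destruct (H eps (cond_pos eps)) as [d [Hd0 Hd]].
    exists (mkposreal d Hd0). intros s Hs Ds. apply ballR. apply Hd; auto.
Qed.

Lemma cont_eps (g : R -> R) (x : R) :
  (forall eps, 0 < eps -> exists d, 0 < d /\
     forall y, Rabs (y - x) < d -> Rabs (g y - g x) < eps) -> continuous g x.
Proof.
  intros H. apply filterlim_locally. intro eps.
  destruct (H eps (cond_pos eps)) as [d [Hd0 Hd]].
  exists (mkposreal d Hd0). intros y Hy. apply ballR. apply Hd. exact Hy.
Qed.

Lemma deriv_interior (f f' : R -> R) (t : R) :
  0 < t -> is_derive_nonneg f f' t -> is_derive f t (f' t).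
Proof.
  intros Ht H. apply is_derive_Reals. intros eps Heps.
  unfold is_derive_nonneg in H. rewrite within_eps in H.
  destruct (H eps Heps) as [d [Hd0 Hd]].
  assert (Hm : 0 < Rmin d t) by (apply Rmin_glb_lt; lra).
  exists (mkposreal _ Hm). intros h Hh0 Hh. simpl in Hh.
  assert (Hh1 : Rabs h < d) by (apply Rlt_le_trans with (1 := Hh); apply Rmin_l).
  assert (Hh2 : Rabs h < t) by (apply Rlt_le_trans with (1 := Hh); apply Rmin_r).
  replace ((f (t + h) - f t) / h) with ((f (t + h) - f t) / (t + h - t)) by (f_equal; ring).
  apply Hd.
  - split. apply Rabs_def2 in Hh2. lra. lra.
  - replace (t + h - t) with h by ring. exact Hh1.
Qed.

Lemma deriv_to_nonneg (f g f' : R -> R) (t : R) :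
  0 <= t -> (forall s, 0 <= s -> f s = g s) -> is_derive g t (f' t) ->
  is_derive_nonneg f f' t.
Proof.
  intros Ht Hfg H. apply is_derive_Reals in H.
  unfold is_derive_nonneg. apply within_eps. intros eps Heps.
  destruct (H eps Heps) as [d Hd]. exists d. split; [apply cond_pos|].
  intros s [Hs0 Hst] Hs.
  rewrite (Hfg s Hs0), (Hfg t Ht).
  pose proof (Hd (s - t)) as Hd'.
  replace (t + (s - t)) with s in Hd' by ring.
  apply Hd'. lra. exact Hs.
Qed.

Lemma deriv_cont_nonneg (f f' : R -> R) (t : R) :
  is_derive_nonneg f f' t ->
  forall eps, 0 < eps -> exists d, 0 < d /\
    forall s, 0 <= s -> Rabs (s - t) < d -> Rabs (f s - f t) < eps.
Proof.
  intros H eps Heps. unfold is_derive_nonneg in H. rewrite within_eps in H.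
  destruct (H 1 Rlt_0_1) as [d [Hd0 Hd]].
  set (K := Rabs (f' t) + 1).
  assert (HK : 0 < K) by (unfold K; pose proof (Rabs_pos (f' t)); lra).
  exists (Rmin d (eps / K)). split.
  { apply Rmin_glb_lt; [lra| apply Rdiv_lt_0_compat; lra]. }
  intros s Hs0 Hs.
  destruct (Req_dec s t) as [->|Hst].
  { replace (f t - f t) with 0 by ring. rewrite Rabs_R0. lra. }
  assert (Hsd : Rabs (s - t) < d) by (apply Rlt_le_trans with (1 := Hs); apply Rmin_l).
  assert (Hse : Rabs (s - t) < eps / K) by (apply Rlt_le_trans with (1 := Hs); apply Rmin_r).
  pose proof (Hd s (conj Hs0 Hst) Hsd) as Hq.
  assert (Hne : s - t <> 0) by lra.
  assert (Hq2 : Rabs ((f s - f t) / (s - t)) <= K).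
  { unfold K. replace ((f s - f t) / (s - t)) with (((f s - f t) / (s - t) - f' t) + f' t) by ring.
    eapply Rle_trans; [apply Rabs_triang|]. lra. }
  replace (f s - f t) with ((f s - f t) / (s - t) * (s - t)) by (field; exact Hne).
  rewrite Rabs_mult.
  assert (Hp : 0 < Rabs (s - t)) by (apply Rabs_pos_lt; exact Hne).
  apply Rle_lt_trans with (K * Rabs (s - t)).
  { apply Rmult_le_compat_r; [apply Rabs_pos| exact Hq2]. }
  apply Rmult_lt_reg_r with (/ K). apply Rinv_0_lt_compat; lra.
  replace (K * Rabs (s - t) * / K) with (Rabs (s - t)) by (field; lra).
  exact Hse.
Qed.

Definition bt (b : R -> R) x := b (Rmax 0 x).
Definition BB b x := RInt (bt b) 0 x.
Definition EE b x := exp (- BB b x).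

Lemma Rmax_lip y x : Rabs (Rmax 0 y - Rmax 0 x) <= Rabs (y - x).
Proof.
  unfold Rmax; destruct (Rle_dec 0 y); destruct (Rle_dec 0 x);
  unfold Rabs; repeat destruct Rcase_abs; lra.
Qed.

Lemma bt_cont b b' (Hder : forall t, 0 <= t -> is_derive_nonneg b b' t) x :
  continuous (bt b) x.
Proof.
  apply cont_eps. intros eps Heps.
  assert (H0 : 0 <= Rmax 0 x) by apply Rmax_l.
  destruct (deriv_cont_nonneg _ _ _ (Hder _ H0) eps Heps) as [d [Hd0 Hd]].
  exists d. split; auto. intros y Hy. unfold bt. apply Hd. apply Rmax_l.
  eapply Rle_lt_trans. apply Rmax_lip. exact Hy.
Qed.

Lemma bt_ex b b' (Hder : forall t, 0 <= t -> is_derive_nonneg b b' t) a c :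
  ex_RInt (bt b) a c.
Proof. apply (ex_RInt_continuous (V := R_CompleteNormedModule)). intros; eapply bt_cont; eauto. Qed.

Lemma BB_der b b' (Hder : forall t, 0 <= t -> is_derive_nonneg b b' t) x :
  is_derive (BB b) x (bt b x).
Proof.
  unfold BB. apply is_derive_RInt with 0.
  apply filter_forall. intros y. apply RInt_correct. eapply bt_ex; eauto.
  eapply bt_cont; eauto.
Qed.
Lemma EE_der b b' (Hder : forall t, 0 <= t -> is_derive_nonneg b b' t) x :
  is_derive (EE b) x (- bt b x * EE b x).
Proof.
  assert (H1 : is_derive (fun y => - BB b y) x (- bt b x)).
  { apply (is_derive_opp (BB b) x (bt b x)). eapply BB_der; eauto. }
  pose proof (is_derive_comp exp (fun y => - BB b y) x (exp (- BB b x)) (- bt b x) (is_derive_exp _) H1) as H2.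
  unfold EE. replace (- bt b x * exp (- BB b x)) with (scal (- bt b x) (exp (- BB b x))).
  exact H2. reflexivity.
Qed.
Lemma EE_cont b b' (Hder : forall t, 0 <= t -> is_derive_nonneg b b' t) x :
  continuous (EE b) x.
Proof. apply (ex_derive_continuous (K := R_AbsRing) (V := R_NormedModule)). eexists. eapply EE_der; eauto. Qed.

Lemma EE_ex b b' (Hder : forall t, 0 <= t -> is_derive_nonneg b b' t) a c :
  ex_RInt (EE b) a c.
Proof. apply (ex_RInt_continuous (V := R_CompleteNormedModule)). intros; eapply EE_cont; eauto. Qed.

Lemma EE_pos b x : 0 < EE b x.
Proof. apply exp_pos. Qed.

Lemma is_derive_eq (f : R -> R) x l l' : is_derive f x l -> l = l' -> is_derive f x l'.
Proof. intros H <-; exact H. Qed.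

Lemma aux1 (p q : R) : q = p + q - p.
Proof. ring. Qed.

Lemma MVT' (f df : R -> R) a b : a <= b ->
  (forall s, a <= s <= b -> is_derive f s (df s)) ->
  exists c, a <= c <= b /\ f b - f a = df c * (b - a).
Proof.
  intros Hab H.
  destruct (MVT_gen f a b df) as [c [Hc Heq]].
  - intros x Hx. rewrite Rmin_left in Hx by lra. rewrite Rmax_right in Hx by lra.
    apply H; lra.
  - intros x Hx. rewrite Rmin_left in Hx by lra. rewrite Rmax_right in Hx by lra.
    apply continuity_pt_filterlim.
    apply (ex_derive_continuous (K := R_AbsRing) (V := R_NormedModule)).
    exists (df x). apply H; lra.
  - rewrite Rmin_left in Hc by lra. rewrite Rmax_right in Hc by lra.
    exists c. split; auto.
Qed.

Lemma integrand_eq b b' (Hder : forall t, 0 <= t -> is_derive_nonneg b b' t) t x :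
  0 <= t -> t <= x -> Phi_integrand b t x = exp (BB b t) * EE b x.
Proof.
  intros Ht Htx. unfold Phi_integrand, EE.
  assert (E1 : @eq R (RInt b t x) (RInt (bt b) t x)).
  { apply (RInt_ext (V := R_CompleteNormedModule)). intros y Hy.
    rewrite Rmin_left in Hy by lra. unfold bt. rewrite Rmax_right by lra. reflexivity. }
  assert (E2 : @eq R (RInt (bt b) t x) (BB b x - BB b t)).
  { unfold BB. pose proof (RInt_Chasles (V := R_CompleteNormedModule) (bt b) 0 t x ltac:(eapply bt_ex; eauto) ltac:(eapply bt_ex; eauto)) as HC.
    change (RInt (bt b) 0 t + RInt (bt b) t x = RInt (bt b) 0 x) in HC.
    rewrite <- HC. apply aux1. }
  rewrite E1, E2, <- exp_plus. f_equal. ring.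
Qed.

Lemma u_der b b' (Hder : forall t, 0 <= t -> is_derive_nonneg b b' t)
  (Hpos : forall t, 0 <= t -> 0 < b t) s : 0 < s ->
  is_derive (fun s => / b s) s (- b' s / b s ^ 2).
Proof.
  intros Hs. apply is_derive_inv. apply deriv_interior; auto. apply Hder; lra.
  apply Rgt_not_eq, Hpos; lra.
Qed.

Lemma u_lip b b' c T (Hder : forall t, 0 <= t -> is_derive_nonneg b b' t)
  (Hpos : forall t, 0 <= t -> 0 < b t) (HT : 0 < T)
  (Hc : forall t, T <= t -> Rabs (b' t) / b t ^ 2 < c) x y :
  T <= x <= y -> Rabs (/ b y - / b x) <= c * (y - x).
Proof.
  intros Hxy.
  destruct (MVT' (fun s => / b s) (fun s => - b' s / b s ^ 2) x y) as [z [Hz Heq]].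
  lra. intros s Hs. apply u_der; auto; lra.
  rewrite Heq, Rabs_mult, (Rabs_right (y - x)) by lra.
  apply Rmult_le_compat_r; [lra|].
  assert (Hb : 0 < b z) by (apply Hpos; lra).
  unfold Rdiv. rewrite Rabs_mult, Rabs_Ropp, (Rabs_right (/ b z ^ 2)).
  apply Rlt_le, Hc; lra.
  apply Rle_ge, Rlt_le, Rinv_0_lt_compat, pow_lt; lra.
Qed.

Lemma h_mono b b' c T (Hder : forall t, 0 <= t -> is_derive_nonneg b b' t)
  (Hpos : forall t, 0 <= t -> 0 < b t) (HT : 0 < T)
  (Hc : forall t, T <= t -> Rabs (b' t) / b t ^ 2 < c) t S :
  T <= t <= S ->
  / b S * EE b S + (1 - c) * RInt (EE b) t S <= / b t * EE b t.
Proof.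
  intros HtS.
  set (h := fun s => / b s * EE b s + (1 - c) * RInt (EE b) t s).
  set (dh := fun s => (- b' s / b s ^ 2) * EE b s + / b s * (- bt b s * EE b s) + (1 - c) * EE b s).
  destruct (MVT' h dh t S) as [z [Hz Heq]]. lra.
  - intros s Hs. unfold h, dh.
    apply (is_derive_plus (K := R_AbsRing) (V := R_NormedModule)
       (fun s => / b s * EE b s) (fun s => (1 - c) * RInt (EE b) t s)).
    + apply (is_derive_mult (K := R_AbsRing) (fun s => / b s) (EE b)).
      apply u_der; auto; lra. eapply EE_der; eauto. intros; apply Rmult_comm.
    + apply is_derive_scal. apply (is_derive_RInt (V := R_NormedModule)) with t.
      apply filter_forall. intros y. apply (RInt_correct (V := R_CompleteNormedModule)). eapply EE_ex; eauto.
      eapply EE_cont; eauto.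
  - assert (Hdz : dh z <= 0).
    { unfold dh, bt. rewrite Rmax_right by lra.
      assert (Hb : 0 < b z) by (apply Hpos; lra).
      pose proof (EE_pos b z) as He.
      pose proof (Hc z ltac:(lra)) as Hcz.
      assert (Hq : - b' z / b z ^ 2 <= Rabs (b' z) / b z ^ 2).
      { unfold Rdiv. apply Rmult_le_compat_r. apply Rlt_le, Rinv_0_lt_compat, pow_lt; lra.
        rewrite <- Rabs_Ropp. apply RRle_abs. }
      replace (- b' z / b z ^ 2 * EE b z + / b z * (- b z * EE b z) + (1 - c) * EE b z)
        with ((- b' z / b z ^ 2 - c) * EE b z) by (field; lra).
      rewrite <- (Rmult_0_l (EE b z)). apply Rmult_le_compat_r; lra. }
    assert (Hle : h S - h t <= 0).
    { rewrite Heq. rewrite <- (Rmult_0_l (S - t)). apply Rmult_le_compat_r; lra. }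
    unfold h in Hle. rewrite RInt_point in Hle.
    change (@zero R_CompleteNormedModule) with 0 in Hle. lra.
Qed.

Lemma F_chasles b b' (Hder : forall t, 0 <= t -> is_derive_nonneg b b' t) a y :
  @eq R (RInt (EE b) 0 y) (RInt (EE b) 0 a + RInt (EE b) a y).
Proof.
  pose proof (RInt_Chasles (V := R_CompleteNormedModule) (EE b) 0 a y
     ltac:(eapply EE_ex; eauto) ltac:(eapply EE_ex; eauto)) as HC.
  symmetry. exact HC.
Qed.

Lemma F_mono b b' (Hder : forall t, 0 <= t -> is_derive_nonneg b b' t) a y :
  a <= y -> RInt (EE b) 0 a <= RInt (EE b) 0 y.
Proof.
  intros H. rewrite (F_chasles b b' Hder a y).
  assert (0 <= RInt (EE b) a y).
  { apply RInt_ge_0; auto. eapply EE_ex; eauto. intros; apply Rlt_le, EE_pos. }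
  lra.
Qed.

Lemma J_exists b b' c T (Hder : forall t, 0 <= t -> is_derive_nonneg b b' t)
  (Hpos : forall t, 0 <= t -> 0 < b t) (HT : 0 < T)
  (Hc : forall t, T <= t -> Rabs (b' t) / b t ^ 2 < c) (Hc1 : c < 1) :
  exists m, (forall S, T <= S -> RInt (EE b) 0 S <= m) /\
    (forall eps, 0 < eps -> exists S0, T <= S0 /\ m - eps < RInt (EE b) 0 S0).
Proof.
  set (A := fun y => exists S, T <= S /\ y = RInt (EE b) 0 S).
  assert (Hb : bound A).
  { exists (RInt (EE b) 0 T + / b T * EE b T / (1 - c)).
    intros y [S [HS ->]]. rewrite (F_chasles b b' Hder T S).
    pose proof (h_mono b b' c T Hder Hpos HT Hc T S ltac:(lra)) as Hh.
    assert (0 <= / b S * EE b S).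
    { apply Rmult_le_pos. apply Rlt_le, Rinv_0_lt_compat, Hpos; lra. apply Rlt_le, EE_pos. }
    assert (RInt (EE b) T S <= / b T * EE b T / (1 - c)).
    { apply Rmult_le_reg_l with (1 - c). lra.
      replace ((1 - c) * (/ b T * EE b T / (1 - c))) with (/ b T * EE b T) by (field; split; [apply Rgt_not_eq, Hpos; lra | lra]).
      lra. }
    lra. }
  destruct (completeness A Hb) as [m [Hm1 Hm2]].
  { exists (RInt (EE b) 0 T). exists T. split; auto; lra. }
  exists m. split.
  - intros S HS. apply Hm1. exists S. split; auto.
  - intros eps Heps. apply NNPP. intros Hn.
    assert (Hub : is_upper_bound A (m - eps)).
    { intros y [S [HS ->]]. apply Rnot_lt_le. intros Hlt. apply Hn. exists S. split; auto. }
    apply Hm2 in Hub. lra.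
Qed.

Lemma E_gen b b' T m (Hder : forall t, 0 <= t -> is_derive_nonneg b b' t)
  (Hm1 : forall S, T <= S -> RInt (EE b) 0 S <= m)
  (Hm2 : forall eps, 0 < eps -> exists S0, T <= S0 /\ m - eps < RInt (EE b) 0 S0) a :
  is_RInt_gen (EE b) (at_point a) (Rbar_locally p_infty) (m - RInt (EE b) 0 a).
Proof.
  unfold is_RInt_gen.
  apply (filterlimi_lim_ext_loc (fun ab : R * R => RInt (EE b) (fst ab) (snd ab))).
  - apply filter_forall. intros [x y]. apply (RInt_correct (V := R_CompleteNormedModule)). eapply EE_ex; eauto.
  - apply filterlim_locally. intros eps.
    destruct (Hm2 eps (cond_pos eps)) as [S0 [HS0 HS0']].
    apply Filter_prod with (Q := fun x => x = a) (R := fun y => S0 < y).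
    + reflexivity.
    + exists S0. auto.
    + intros x y -> Hy. apply ballR. simpl.
      pose proof (F_chasles b b' Hder a y) as HC.
      pose proof (Hm1 y ltac:(lra)).
      pose proof (F_mono b b' Hder S0 y ltac:(lra)).
      apply Rabs_def1; lra.
Qed.

Lemma expBE b t : exp (BB b t) * EE b t = 1.
Proof. unfold EE. rewrite <- exp_plus. replace (BB b t + - BB b t) with 0 by ring. apply exp_0. Qed.

Lemma exp_le x y : x <= y -> exp x <= exp y.
Proof. intros [H|H]. apply Rlt_le, exp_increasing, H. subst; apply Rle_refl. Qed.

Lemma BB_diff b b' (Hder : forall t, 0 <= t -> is_derive_nonneg b b' t) t x :
  BB b x - BB b t = RInt (bt b) t x.
Proof.
  unfold BB. pose proof (RInt_Chasles (V := R_CompleteNormedModule) (bt b) 0 t x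
     ltac:(eapply bt_ex; eauto) ltac:(eapply bt_ex; eauto)) as HC.
  change (RInt (bt b) 0 t + RInt (bt b) t x = RInt (bt b) 0 x) in HC.
  rewrite <- HC. ring.
Qed.

Theorem lemma2p2 (b b' : R -> R) (b0 : R)
  (Hder : forall t, 0 <= t -> is_derive_nonneg b b' t)
  (Hcont : forall t, 0 <= t -> continuous_nonneg b' t)
  (Hpos : forall t, 0 <= t -> 0 < b t)
  (Hb0 : is_LimSup_infty (fun t => Rabs (b' t) / (b t ^ 2)) b0)
  (Hb0lt : b0 < 1) :
  (forall t, 0 <= t ->
     ex_RInt_gen (Phi_integrand b t) (at_point t) (Rbar_locally p_infty)) /\
  Phi b 0 = RInt_gen (fun s => exp (- RInt b 0 s)) (at_point 0) (Rbar_locally p_infty) /\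
  exists Phi' : R -> R,
    (forall t, 0 <= t ->
       is_derive_nonneg (Phi b) Phi' t /\ Phi' t - b t * Phi b t = -1) /\
    exists t0 B1 B2 : R,
      0 < t0 /\ 0 < B1 /\ 0 < B2 /\
      (forall t, t0 <= t -> B1 / b t <= Phi b t <= B2 / b t) /\
      (forall t, t0 <= t -> Rabs (Phi' t) <= (1 + b0) / (1 - b0)) /\
      (exists M : R, forall t, 0 <= t -> Rabs (Phi' t) <= M).
Proof.
  assert (Hb0pos : 0 <= b0).
  { apply Rnot_lt_le. intros Hn.
    destruct (Hb0 (mkposreal (- b0) ltac:(lra))) as [_ [T1 HT1]].
    specialize (HT1 (Rmax T1 0) (Rmax_l _ _)). cbn [pos] in HT1.
    assert (Hbp : 0 < b (Rmax T1 0)) by (apply Hpos, Rmax_r).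
    assert (0 <= Rabs (b' (Rmax T1 0)) / b (Rmax T1 0) ^ 2).
    { unfold Rdiv. apply Rmult_le_pos. apply Rabs_pos. apply Rlt_le, Rinv_0_lt_compat.
      apply pow_lt. exact Hbp. }
    lra. }
  set (c := (1 + b0) / 2).
  destruct (Hb0 (mkposreal ((1 - b0)/2) ltac:(lra))) as [_ [T0 HT0]].
  set (T := Rmax 1 T0).
  assert (HT1 : 1 <= T) by (unfold T; apply Rmax_l).
  assert (HT : 0 < T) by lra.
  assert (Hc : forall t, T <= t -> Rabs (b' t) / b t ^ 2 < c).
  { intros t Ht. assert (T0 <= t) by (unfold T in Ht; pose proof (Rmax_r 1 T0); lra).
    specialize (HT0 t H). cbn [pos] in HT0. unfold c. lra. }
  assert (Hc1 : c < 1) by (unfold c; lra).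
  destruct (J_exists b b' c T Hder Hpos HT Hc Hc1) as [m [Hm1 Hm2]].
  set (G := fun t => exp (BB b t) * (m - RInt (EE b) 0 t)).
  assert (HPhi : forall t, 0 <= t -> is_RInt_gen (Phi_integrand b t) (at_point t) (Rbar_locally p_infty) (G t)).
  { intros t Ht. pose proof (E_gen b b' T m Hder Hm1 Hm2 t) as HE.
    pose proof (is_RInt_gen_scal (Fa:=at_point t) (Fb:=Rbar_locally p_infty) (EE b) (exp (BB b t)) _ HE) as HE2.
    apply (is_RInt_gen_ext (fun y => scal (exp (BB b t)) (EE b y))).
    + apply Filter_prod with (Q := fun x => x = t) (R := fun y => t < y).
      reflexivity. exists t; auto.
      intros x y -> Hy z Hz. simpl in Hz. rewrite Rmin_left, Rmax_right in Hz by lra.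
      rewrite (integrand_eq b b' Hder t z Ht ltac:(lra)). reflexivity.
    + exact HE2. }
  assert (HPG : forall t, 0 <= t -> Phi b t = G t).
  { intros t Ht. unfold Phi. apply is_RInt_gen_unique. apply HPhi; auto. }
  assert (HGd : forall t, is_derive G t (bt b t * G t - 1)).
  { intros t. unfold G.
    eapply is_derive_eq.
    apply (is_derive_mult (K:=R_AbsRing) (fun t => exp (BB b t)) (fun t => m - RInt (EE b) 0 t)).
    - apply (is_derive_comp exp (BB b)). apply is_derive_exp. eapply BB_der; eauto.
    - apply (is_derive_minus (K:=R_AbsRing) (V:=R_NormedModule) (fun _ => m) (fun t => RInt (EE b) 0 t)).
      apply is_derive_const. apply (is_derive_RInt (V:=R_NormedModule)) with 0.
      apply filter_forall. intros y. apply (RInt_correct (V := R_CompleteNormedModule)). eapply EE_ex; eauto.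
      eapply EE_cont; eauto.
    - intros; apply Rmult_comm.
    - pose proof (expBE b t) as H1.
      unfold plus, mult, scal, minus, zero, opp; simpl. unfold mult; simpl.
      unfold plus; simpl. rewrite <- H1. ring. }
  split.
  { intros t Ht. exists (G t). apply HPhi; auto. }
  split. { reflexivity. }
  exists (fun t => b t * Phi b t - 1).
  split.
  { intros t Ht. split; [|ring].
    apply deriv_to_nonneg with G; auto.
    eapply is_derive_eq. apply HGd. rewrite HPG by auto. unfold bt; rewrite Rmax_right by lra. reflexivity. }
  assert (Hup : forall t, T <= t -> G t <= / b t / (1 - c)).
  { intros t Ht. unfold G.
    assert (Hbt : 0 < b t) by (apply Hpos; lra).
    set (K' := / b t * EE b t / (1 - c)).
    assert (HK'0 : 0 < K').
    { unfold K'. unfold Rdiv. apply Rmult_lt_0_compat. apply Rmult_lt_0_compat.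
      apply Rinv_0_lt_compat; lra. apply EE_pos. apply Rinv_0_lt_compat; lra. }
    assert (HK : m - RInt (EE b) 0 t <= K').
    { apply Rnot_lt_le. intros Hlt.
      destruct (Hm2 (m - RInt (EE b) 0 t - K') ltac:(lra)) as [S0 [HS0 HS0']].
      destruct (Rle_dec S0 t) as [r|r].
      - pose proof (F_mono b b' Hder S0 t r). lra.
      - rewrite (F_chasles b b' Hder t S0) in HS0'.
        pose proof (h_mono b b' c T Hder Hpos HT Hc t S0 ltac:(lra)) as Hh.
        assert (0 <= / b S0 * EE b S0).
        { apply Rmult_le_pos. apply Rlt_le, Rinv_0_lt_compat, Hpos; lra. apply Rlt_le, EE_pos. }
        assert (RInt (EE b) t S0 <= K').
        { apply Rmult_le_reg_l with (1 - c). lra. unfold K'.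
          replace ((1 - c) * (/ b t * EE b t / (1 - c))) with (/ b t * EE b t)
            by (field; split; [apply Rgt_not_eq; lra | lra]).
          lra. }
        lra. }
    apply Rle_trans with (exp (BB b t) * K').
    apply Rmult_le_compat_l; [apply Rlt_le, exp_pos| exact HK].
    right. unfold K'.
    replace (exp (BB b t) * (/ b t * EE b t / (1 - c))) with (/ b t / (1 - c) * (exp (BB b t) * EE b t)) by (unfold Rdiv; ring).
    rewrite expBE. ring. }
  assert (Hlow : forall t, T <= t -> exp (-1) / 2 / b t <= G t).
  { intros t Ht.
    assert (Hbt : 0 < b t) by (apply Hpos; lra).
    set (d := / b t / 2).
    assert (Hd : 0 < d) by (unfold d; apply Rmult_lt_0_compat; [apply Rinv_0_lt_compat; lra| lra]).
    assert (Hpt : forall x, t < x < t + d -> EE b t * exp (-1) <= EE b x).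
    { intros x Hx.
      assert (Hbx : forall y, t < y < x -> bt b y <= 2 * b t).
      { intros y Hy. unfold bt. rewrite Rmax_right by lra.
        pose proof (u_lip b b' c T Hder Hpos HT Hc t y ltac:(lra)) as Hl.
        assert (Hby : 0 < b y) by (apply Hpos; lra).
        assert (Hl2 : / b t - / b y <= c * (y - t)).
        { eapply Rle_trans; [|exact Hl]. rewrite <- Rabs_Ropp.
          replace (- (/ b y - / b t)) with (/ b t - / b y) by ring. apply RRle_abs. }
        assert (Hl3 : c * (y - t) <= y - t).
        { assert (0 <= (1 - c) * (y - t)) by (apply Rmult_le_pos; lra). lra. }
        assert (Hl4 : / b t / 2 <= / b y).
        { unfold d in Hx. lra. }
        pose proof (Rinv_le_contravar (/ b t / 2) (/ b y) ltac:(apply Rmult_lt_0_compat; [apply Rinv_0_lt_compat; lra| lra]) Hl4) as Hl5.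
        rewrite Rinv_inv in Hl5.
        replace (/ (/ b t / 2)) with (2 * b t) in Hl5 by (field; apply Rgt_not_eq; lra).
        exact Hl5. }
      assert (HBx : BB b x - BB b t <= 1).
      { rewrite (BB_diff b b' Hder t x).
        apply Rle_trans with (RInt (fun _ => 2 * b t) t x).
        apply RInt_le. lra. eapply bt_ex; eauto. apply ex_RInt_const.
        intros y Hy. apply Hbx; lra.
        rewrite RInt_const. unfold scal; simpl; unfold mult; simpl.
        apply Rle_trans with (d * (2 * b t)).
        apply Rmult_le_compat_r; lra.
        right. unfold d. field. apply Rgt_not_eq; lra. }
      unfold EE. rewrite <- exp_plus. apply exp_le. lra. }
    assert (HI : d * (EE b t * exp (-1)) <= RInt (EE b) t (t + d)).
    { apply Rle_trans with (RInt (fun _ => EE b t * exp (-1)) t (t + d)).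
      rewrite RInt_const. unfold scal; simpl; unfold mult; simpl. right. f_equal. ring.
      apply RInt_le. lra. apply ex_RInt_const. eapply EE_ex; eauto. exact Hpt. }
    pose proof (Hm1 (t + d) ltac:(lra)) as Hmd.
    rewrite (F_chasles b b' Hder t (t + d)) in Hmd.
    unfold G.
    apply Rle_trans with (exp (BB b t) * (d * (EE b t * exp (-1)))).
    right. replace (exp (BB b t) * (d * (EE b t * exp (-1)))) with (d * exp (-1) * (exp (BB b t) * EE b t)) by ring.
    rewrite expBE. unfold d. field. apply Rgt_not_eq; lra.
    apply Rmult_le_compat_l. apply Rlt_le, exp_pos. lra. }
  assert (Hc_eq : / (1 - c) - 1 = (1 + b0) / (1 - b0)).
  { unfold c. field. lra. }
  assert (Hinv2 : 2 <= / (1 - c)).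
  { pose proof (Rinv_le_contravar (1 - c) (/ 2) ltac:(unfold c; lra) ltac:(unfold c; lra)) as H2.
    rewrite Rinv_inv in H2. exact H2. }
  assert (Hbd : forall t, T <= t -> Rabs (b t * Phi b t - 1) <= (1 + b0) / (1 - b0)).
  { intros t Ht. rewrite HPG by lra. assert (Hbt : 0 < b t) by (apply Hpos; lra).
    pose proof (Hup t Ht) as H1. pose proof (Hlow t Ht) as H2.
    assert (H3 : b t * G t <= / (1 - c)).
    { apply Rle_trans with (b t * (/ b t / (1 - c))). apply Rmult_le_compat_l; lra.
      right. field. split; [apply Rgt_not_eq; lra| unfold c; lra]. }
    assert (H4 : 0 <= b t * G t).
    { apply Rmult_le_pos. lra. eapply Rle_trans; [|exact H2].
      unfold Rdiv. apply Rmult_le_pos. apply Rmult_le_pos. apply Rlt_le, exp_pos. lra.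
      apply Rlt_le, Rinv_0_lt_compat; lra. }
    apply Rabs_le. split; lra. }
  exists T, (exp (-1) / 2), (/ (1 - c)).
  split; [lra|].
  split; [unfold Rdiv; apply Rmult_lt_0_compat; [apply exp_pos| lra]|].
  split; [apply Rinv_0_lt_compat; unfold c; lra|].
  split.
  { intros t Ht. rewrite HPG by lra. split.
    - apply (Hlow t Ht).
    - replace (/ (1 - c) / b t) with (/ b t / (1 - c)) by (unfold Rdiv; ring). apply (Hup t Ht). }
  split. { exact Hbd. }
  set (f := fun t => Rabs (bt b t * G t - 1)).
  destruct (continuity_ab_maj f 0 T ltac:(lra)) as [Mx [HMx _]].
  { intros x Hx. apply continuity_pt_filterlim. unfold f.
    apply (continuous_Rabs_comp (fun y => bt b y * G y - 1)).
    apply (continuous_minus (K := R_AbsRing) (V := R_NormedModule) (fun y => bt b y * G y) (fun _ => 1)).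
    apply (continuous_mult (K := R_AbsRing) (bt b) G). eapply bt_cont; eauto.
    apply (ex_derive_continuous (K := R_AbsRing) (V := R_NormedModule)). eexists; apply HGd.
    apply continuous_const. }
  exists (Rmax (f Mx) ((1 + b0) / (1 - b0))).
  intros t Ht. destruct (Rle_dec t T).
  - eapply Rle_trans; [|apply Rmax_l]. eapply Rle_trans; [|apply (HMx t); lra].
    unfold f, bt. rewrite Rmax_right by lra. rewrite HPG by lra. right; reflexivity.
  - eapply Rle_trans; [|apply Rmax_r]. apply Hbd; lra.
Qed.
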